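(* Let $H=F[1/t]\subseteq\mathbb{Q}[t,1/t]$. Then: (a) $H$ is a Hopf subalgebra of the Hopf algebra $\mathbb{Q}[t,1/t]$ with coproduct $\Delta(t)=t\otimes t$. (b) $H$ is a binomial ring; it is the free binomial ring on a unit.
   Context: $F\subseteq\mathbb{Q}[t]$ is the ring of numerical polynomials (polynomials $f$ with $f(n)\in\mathbb{Z}$ for all integers $n\gg0$), with $\mathbb{Z}$-basis $\binom tn$, $n\ge 0$; $H=F[1/t]$ is its localization at $t$, a subring of $\mathbb{Q}[t,1/t]$. A binomial ring is a subring $R$ of a $\mathbb{Q}$-algebra which is closed under the operations $r\mapsto\binom rn=r(r-1)\cdots(r-n+1)/n!$ for all $n\ge0$. ''Free binomial ring on a unit'' means: for every binomial ring $R$ and every unit $r\in R$ there is a unique ring homomorphism $H\to R$ sending $t$ to $r$. The Hopf algebra structure on $\mathbb{Q}[t,1/t]$ has $\Delta(t)=t\otimes t$, counit $t\mapsto1$ and antipode $t\mapsto t^{-1}$; $F\otimes F$ is identified with the ring of numerical polynomials in $\mathbb{Q}[t_1,t_2]\cong\mathbb{Q}[t]\otimes\mathbb{Q}[t]$. *)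

(* Defs.v *)
From HB Require Import structures.
From mathcomp Require Import all_boot all_order all_algebra.
Set Implicit Arguments. Unset Strict Implicit. Unset Printing Implicit Defensive.
Import Order.TTheory GRing.Theory Num.Theory.
Local Open Scope ring_scope.

Definition numerical (p : {poly rat}) : Prop :=
  exists N : nat, forall n : nat, (N <= n)%N -> exists z : int, p.[n%:R] = z%:~R.

(* Evaluation of the Laurent polynomial p(t) * t^(-k) at a unit x of a
   ring L containing Q:   p(x) * x^(-k). *)
Definition lev (L : unitRingType) (x : L) (p : {poly rat}) (k : nat) : L :=
  (map_poly (@ratr L) p).[x] * x ^- k.

(* Ambient field for Q[t,1/t]: Q(t); the variable t. *)
Definition K1 := {fraction {poly rat}}.
Definition T : K1 := tofrac ('X : {poly rat}).

Definition laurent (x : K1) : Prop := exists (p : {poly rat}) (k : nat), x = lev T p k.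

Definition inH (x : K1) : Prop :=
  exists (p : {poly rat}) (k : nat), numerical p /\ x = lev T p k.

(* Ambient field for Q[t,1/t] (x) Q[t,1/t] = Q[t1^(+-1), t2^(+-1)] : Q(t1,t2);
   g (x) h is identified with g(t1) h(t2). *)
Definition K2 := {fraction {poly {poly rat}}}.
Definition t1 : K2 := tofrac (('X : {poly rat})%:P).
Definition t2 : K2 := tofrac ('X : {poly {poly rat}}).

(* The image of H (x)_Z H in Q[t,1/t] (x)_Q Q[t,1/t] (Z-span of the g (x) h,
   g, h in H). *)
Definition inHH (z : K2) : Prop :=
  exists s : seq (({poly rat} * nat) * ({poly rat} * nat)),
    (forall e, e \in s -> numerical e.1.1 /\ numerical e.2.1) /\
    z = \sum_(e <- s) lev t1 e.1.1 e.1.2 * lev t2 e.2.1 e.2.2.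

(* Hopf structure of Q[t,1/t], on an element written p(t) t^(-k):
   Delta(t) = t (x) t, counit t |-> 1, antipode t |-> t^(-1). *)
Definition Delta_rep (p : {poly rat}) (k : nat) : K2 := lev (t1 * t2) p k.
Definition counit_rep (p : {poly rat}) (k : nat) : rat := lev (1 : rat) p k.
Definition antipode_rep (p : {poly rat}) (k : nat) : K1 := lev T^-1 p k.

Definition subring (A : pzRingType) (S : A -> Prop) : Prop :=
  [/\ S 1, (forall x y, S x -> S y -> S (x - y)) & (forall x y, S x -> S y -> S (x * y))].

Definition falling (A : pzRingType) (r : A) (n : nat) : A := \prod_(i < n) (r - i%:R).

Definition binomA (A : comAlgType rat) (r : A) (n : nat) : A :=
  (n`!%:R : rat)^-1 *: falling r n.
Definition binomK1 (r : K1) (n : nat) : K1 := falling r n / n`!%:R.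

Definition binomial_subring (A : comAlgType rat) (R : A -> Prop) : Prop :=
  subring R /\ (forall r n, R r -> R (binomA r n)).

Definition ringhom_H_to (A : comAlgType rat) (R : A -> Prop) (phi : K1 -> A) : Prop :=
  [/\ (forall x, inH x -> R (phi x)), phi 1 = 1,
      (forall x y, inH x -> inH y -> phi (x + y) = phi x + phi y) &
      (forall x y, inH x -> inH y -> phi (x * y) = phi x * phi y)].

(* Main.v *)
Require Import Defs.
From HB Require Import structures.
From Stdlib Require Import ClassicalEpsilon.
From mathcomp Require Import all_boot all_order all_algebra.
From mathcomp Require Import ring zify.
Import Order.TTheory GRing.Theory Num.Theory.
Set Implicit Arguments. Unset Strict Implicit.
Local Open Scope ring_scope.


Lemma ratrK1 (a : rat) : (ratr a : K1) = tofrac (a%:P).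
Proof. by rewrite -(fmorph_eq_rat ((@tofrac {poly rat}) \o polyC)). Qed.
Lemma ratrK2 (a : rat) : (ratr a : K2) = tofrac (a%:P%:P).
Proof. by rewrite -(fmorph_eq_rat ((@tofrac {poly {poly rat}}) \o polyC \o polyC)). Qed.
Lemma ratrQ (a : rat) : (ratr a : rat) = a.
Proof. by rewrite -(fmorph_eq_rat idfun). Qed.

Definition ev (L : unitRingType) (x : L) (p : {poly rat}) := (map_poly (@ratr L) p).[x].
Arguments ev {L}.

Section Gen.
Variable L : comUnitRingType.
Variable f : {rmorphism rat -> L}.
Hypothesis Hf : forall a, ratr a = f a.

Lemma evE (x : L) p : ev x p = (map_poly f p).[x].
Proof. by rewrite /ev (eq_map_poly Hf). Qed.
Lemma evM (x : L) p q : ev x (p * q) = ev x p * ev x q.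
Proof. by rewrite !evE rmorphM hornerM. Qed.
Lemma evB (x : L) p q : ev x (p - q) = ev x p - ev x q.
Proof. by rewrite !evE rmorphB hornerD hornerN. Qed.
Lemma evD (x : L) p q : ev x (p + q) = ev x p + ev x q.
Proof. by rewrite !evE rmorphD hornerD. Qed.
Lemma evN (x : L) p : ev x (- p) = - ev x p.
Proof. by rewrite !evE rmorphN hornerN. Qed.
Lemma evC (x : L) c : ev x c%:P = f c.
Proof. by rewrite evE map_polyC hornerC. Qed.
Lemma ev1 (x : L) : ev x 1 = 1.
Proof. by rewrite evE rmorph1 hornerC. Qed.
Lemma evX (x : L) : ev x 'X = x.
Proof. by rewrite evE map_polyX hornerX. Qed.
Lemma evXn (x : L) j : ev x ('X^j) = x ^+ j.
Proof. by rewrite evE map_polyXn hornerXn. Qed.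
Lemma evZ (x : L) c p : ev x (c *: p) = f c * ev x p.
Proof. by rewrite -mul_polyC evM evC. Qed.
Lemma ev_prod (x : L) n (F : 'I_n -> {poly rat}) :
  ev x (\prod_(i < n) F i) = \prod_(i < n) ev x (F i).
Proof. by rewrite evE rmorph_prod horner_prod; apply: eq_bigr => i _; rewrite evE. Qed.

Lemma unit_expV (x : L) k j : x \is a GRing.unit -> x ^+ j * x ^- (k + j) = x ^- k.
Proof.
by move=> ux; rewrite exprD invrM ?unitrX // mulrA mulrV ?unitrX // mul1r.
Qed.

Lemma levM (x : L) p q k j : x \is a GRing.unit ->
  lev x p k * lev x q j = lev x (p * q) (k + j).
Proof.
move=> ux; rewrite /lev -/(ev x p) -/(ev x q) -/(ev x (p*q)) evM.
by rewrite exprD invrM ?unitrX // mulrACA [x ^- j * _]mulrC.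
Qed.

Lemma levD (x : L) p q k j : x \is a GRing.unit ->
  lev x p k + lev x q j = lev x (p * 'X^j + q * 'X^k) (k + j).
Proof.
move=> ux; rewrite /lev -/(ev x p) -/(ev x q) -/(ev x (_ + _)) evD !evM !evXn.
rewrite mulrDl -!mulrA unit_expV // addnC unit_expV //.
Qed.

Lemma levN (x : L) p k : - lev x p k = lev x (- p) k.
Proof. by rewrite /lev -/(ev x p) -/(ev x (- p)) evN mulNr. Qed.

Lemma levB (x : L) p q k j : x \is a GRing.unit ->
  lev x p k - lev x q j = lev x (p * 'X^j - q * 'X^k) (k + j).
Proof. by move=> ux; rewrite levN levD // mulNr. Qed.

Lemma lev_shift (x : L) p k j : x \is a GRing.unit ->
  lev x p k * x ^- j = lev x p (k + j).
Proof.
by move=> ux; rewrite /lev -mulrA exprD invrM ?unitrX // [x ^- j * _]mulrC.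
Qed.

Lemma mulVXK (x : L) a k j : x \is a GRing.unit ->
  a * x ^- k * x ^+ (k + j) = a * x ^+ j.
Proof.
by move=> ux; rewrite exprD mulrA -(mulrA a) mulVr ?unitrX // mulr1.
Qed.

Lemma lev_eqE (x : L) p q k j : x \is a GRing.unit ->
  (lev x p k = lev x q j) <-> (ev x (p * 'X^j) = ev x (q * 'X^k)).
Proof.
move=> ux; rewrite !evM !evXn /lev -/(ev x p) -/(ev x q); split=> E.
- have := congr1 (fun y => y * x ^+ (k + j)) E => /=.
  by rewrite mulVXK // addnC mulVXK.
- apply: (mulIr (unitrX (k + j) ux)).
  by rewrite mulVXK // addnC mulVXK // E.
Qed.
End Gen.


Definition fK1 := ((@tofrac {poly rat}) \o polyC).
Definition fK2 := ((@tofrac {poly {poly rat}}) \o polyC \o polyC).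
Definition fQ := (@idfun rat).
Lemma HK1 a : ratr a = fK1 a. Proof. exact: ratrK1. Qed.
Lemma HK2 a : ratr a = fK2 a. Proof. exact: ratrK2. Qed.
Lemma HQ a : ratr a = fQ a. Proof. exact: ratrQ. Qed.

Lemma map_polyCX (R : comNzRingType) (p : {poly R}) : (map_poly polyC p).['X] = p.
Proof. by rewrite -[LHS]/(p \Po 'X) comp_polyXr. Qed.

Lemma evT p : ev T p = tofrac p.
Proof.
rewrite (evE HK1) /fK1 map_poly_comp /T horner_map /=.
by rewrite map_polyCX.
Qed.

Lemma ev_t1 p : ev t1 p = tofrac (p%:P).
Proof.
rewrite (evE HK2) /fK2 !map_poly_comp /t1 horner_map /=.
by rewrite (horner_map polyC) map_polyCX.
Qed.

Lemma ev_t2 p : ev t2 p = tofrac (map_poly polyC p).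
Proof.
by rewrite (evE HK2) /fK2 !map_poly_comp /t2 horner_map /= map_polyCX.
Qed.

Lemma ev_t12 p : ev (t1 * t2) p = tofrac (map_poly polyC p \Po ('X%:P * 'X)).
Proof.
by rewrite (evE HK2) /fK2 !map_poly_comp /t1 /t2 -rmorphM horner_map /=.
Qed.

Lemma T_neq0 : T != 0.
Proof. by rewrite /T tofrac_eq0 polyX_eq0. Qed.
Lemma t1_neq0 : t1 != 0.
Proof. by rewrite /t1 tofrac_eq0 polyC_eq0 polyX_eq0. Qed.
Lemma t2_neq0 : t2 != 0.
Proof. by rewrite /t2 tofrac_eq0 polyX_eq0. Qed.
Lemma T_unit : T \is a GRing.unit. Proof. by rewrite unitfE T_neq0. Qed.
Lemma t1_unit : t1 \is a GRing.unit. Proof. by rewrite unitfE t1_neq0. Qed.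
Lemma t2_unit : t2 \is a GRing.unit. Proof. by rewrite unitfE t2_neq0. Qed.
Lemma t12_unit : t1 * t2 \is a GRing.unit. Proof. by rewrite unitrM t1_unit t2_unit. Qed.

Lemma levT_eq p q k j : lev T p k = lev T q j -> p * 'X^j = q * 'X^k.
Proof.
move=> /(lev_eqE HK1 _ _ _ _ T_unit); rewrite !evT => /eqP.
by rewrite tofrac_eq => /eqP.
Qed.

Lemma lev_transfer (L : comUnitRingType) (f : {rmorphism rat -> L})
  (Hf : forall a, ratr a = f a) (y : L) p q k j :
  y \is a GRing.unit -> lev T p k = lev T q j -> lev y p k = lev y q j.
Proof.
move=> uy /levT_eq E; apply/(lev_eqE Hf _ _ _ _ uy).
by rewrite E.
Qed.


Definition Dp (R : nzRingType) (p : {poly R}) := p \Po ('X + 1%:P) - p.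
Definition binp (n : nat) : {poly rat} :=
  (n`!%:R)^-1 *: \prod_(i < n) ('X - (i%:R)%:P).

Lemma prod_nat (R : comNzRingType) (m n : nat) :
  \prod_(i < n) ((m%:R : R) - i%:R) = (m ^_ n)%:R.
Proof.
elim: n => [|n IH]; first by rewrite big_ord0 ffactn0.
rewrite big_ord_recr /= IH ffactnSr natrM.
case: (leqP n m) => h; first by rewrite natrB.
by rewrite ffact_small // !mul0r.
Qed.

Lemma binp_nat (m n : nat) : (binp n).[m%:R] = ('C(m, n))%:R.
Proof.
rewrite /binp hornerZ horner_prod.
under eq_bigr do rewrite hornerXsubC.
rewrite prod_nat -bin_ffact natrM mulrC -mulrA mulfV ?mulr1 //.
by rewrite pnatr_eq0 -lt0n fact_gt0.
Qed.

Lemma hornerDp (R : comNzRingType) (p : {poly R}) x :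
  (Dp p).[x] = p.[x + 1] - p.[x].
Proof. by rewrite /Dp hornerD hornerN horner_comp hornerD hornerX hornerC. Qed.

Lemma DpB (R : comNzRingType) (p q : {poly R}) : Dp (p - q) = Dp p - Dp q.
Proof. rewrite /Dp comp_polyB; ring. Qed.

Lemma DpCM (R : comNzRingType) c (p : {poly R}) : Dp (c%:P * p) = c%:P * Dp p.
Proof. by rewrite /Dp comp_polyM comp_polyC mulrBr. Qed.

Lemma map_Dp (R S : comNzRingType) (g : {rmorphism R -> S}) (p : {poly R}) :
  map_poly g (Dp p) = Dp (map_poly g p).
Proof. by rewrite /Dp rmorphB /= map_comp_poly map_polyXaddC rmorph1. Qed.

Section L0.
Variable R : idomainType.
Variable f : {rmorphism rat -> R}.

Lemma natR_inj : injective (fun m : nat => (m%:R : R)).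
Proof.
move=> m n /= E; apply/eqP; rewrite -(eqr_nat rat); apply/eqP.
by apply: (fmorph_inj f); rewrite !rmorph_nat.
Qed.

Lemma L0 (p : {poly R}) : (forall m : nat, p.[m%:R] = 0) -> p = 0.
Proof.
move=> H; apply/eqP; apply: contraT => pn0.
have := @max_poly_roots _ p [seq i%:R | i <- iota 0 (size p)] pn0.
rewrite size_map size_iota ltnn; apply.
  by apply/allP => x /mapP [i _ ->]; rewrite /root H.
by rewrite map_inj_uniq ?iota_uniq //; apply: natR_inj.
Qed.

Lemma Dp_const (p : {poly R}) : Dp p = 0 -> p = (p.[0])%:P.
Proof.
move=> H.
have E : forall m : nat, p.[m%:R] = p.[0].
  elim=> [//|m IH]; rewrite -IH.
  have := congr1 (horner^~ (m%:R)) H; rewrite hornerDp horner0 => /eqP.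
  by rewrite subr_eq0 -natr1 => /eqP.
apply/eqP; rewrite -subr_eq0; apply/eqP; apply: L0 => m.
by rewrite hornerD hornerN hornerC E subrr.
Qed.
End L0.

Lemma Dbinp n : Dp (binp n.+1) = binp n.
Proof.
apply/eqP; rewrite -subr_eq0; apply/eqP; apply: (L0 idfun) => m.
rewrite hornerD hornerN hornerDp natr1 !binp_nat binS natrD; ring.
Qed.

Lemma Dp0 (R : comNzRingType) : Dp (0 : {poly R}) = 0.
Proof. by rewrite /Dp comp_poly0 subrr. Qed.
Lemma DpD (R : comNzRingType) (p q : {poly R}) : Dp (p + q) = Dp p + Dp q.
Proof. rewrite /Dp comp_polyD; ring. Qed.

Section Newton.
Variable R : idomainType.
Variable f : {rmorphism rat -> R}.

Definition B b := map_poly f (binp b).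

Lemma DB b : Dp (B b.+1) = B b.
Proof. by rewrite /B -map_Dp Dbinp. Qed.

Lemma B0 : B 0 = 1.
Proof. by rewrite /B /binp big_ord0 invr1 scale1r rmorph1. Qed.

Lemma BS0 b : (B b.+1).[0] = 0.
Proof. by rewrite /B -(rmorph0 f) horner_map (binp_nat 0) bin0n rmorph0. Qed.

Lemma sizeD (p : {poly R}) : (size (Dp p) <= (size p).-1)%N.
Proof.
case: (leqP (size p) 1) => hs.
  by rewrite (size1_polyC hs) /Dp comp_polyC subrr size_poly0.
have sc : size (p \Po ('X + 1%:P)) = size p by rewrite size_comp_poly2 // size_XaddC.
have lc : lead_coef (p \Po ('X + 1%:P)) = lead_coef p.
  by rewrite lead_coef_comp ?size_XaddC // lead_coefXaddC expr1n mulr1.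
apply/leq_sizeP => j hj; rewrite coefB.
have [->|hne] := eqVneq j (size p).-1.
  by rewrite -{1}sc -!lead_coefE lc subrr.
have hj' : (size p <= j)%N by move: hne hj hs; case: (size p) => // n; rewrite /=; lia.
by rewrite !nth_default ?subrr // sc.
Qed.

Lemma newton d (p : {poly R}) : (size p <= d)%N ->
  p = \sum_(b < d) ((iter b (@Dp R) p).[0])%:P * B b.
Proof.
elim: d p => [|d IH] p hp.
  by rewrite big_ord0; apply/eqP; rewrite -size_poly_eq0 -leqn0.
have hD : (size (Dp p) <= d)%N by apply: leq_trans (sizeD p) _; move: hp; case: (size p).
have E := IH _ hD.
set g := \sum_(b < d) ((iter b.+1 (@Dp R) p).[0])%:P * B b.+1.
have Dg : Dp g = Dp p.
  rewrite [RHS]E /g (big_morph _ (@DpD R) (@Dp0 R)); apply: eq_bigr => b _.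
  by rewrite DpCM DB iterSr.
have Hc : p - g = ((p - g).[0])%:P by apply: (Dp_const f); rewrite DpB Dg subrr.
have g0 : g.[0] = 0.
  rewrite /g horner_sum big1 // => b _; by rewrite hornerM hornerC BS0 mulr0.
rewrite big_ord_recl /= B0 mulr1.
have -> : \sum_(i < d) (iter (bump 0 i) (@Dp R) p).[0]%:P * B (bump 0 i) = g by [].
by rewrite -[LHS](subrK g) Hc hornerD hornerN g0 subr0.
Qed.
End Newton.


Definition isZ (x : rat) := exists z : int, x = z%:~R.
Definition intv (p : {poly rat}) := forall m : nat, isZ p.[m%:R].

Lemma isZB x y : isZ x -> isZ y -> isZ (x - y).
Proof. by move=> [a ->] [b ->]; exists (a - b); rewrite rmorphB. Qed.
Lemma isZD x y : isZ x -> isZ y -> isZ (x + y).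
Proof. by move=> [a ->] [b ->]; exists (a + b); rewrite rmorphD. Qed.
Lemma isZM x y : isZ x -> isZ y -> isZ (x * y).
Proof. by move=> [a ->] [b ->]; exists (a * b); rewrite rmorphM. Qed.
Lemma isZn (n : nat) : isZ n%:R.
Proof. by exists n%:Z. Qed.

Lemma intv_Dp p : intv p -> intv (Dp p).
Proof. by move=> H m; rewrite hornerDp natr1; apply: isZB. Qed.
Lemma intv_iter p b : intv p -> intv (iter b (@Dp _) p).
Proof. by move=> H; elim: b => //= b IH; apply: intv_Dp. Qed.

Inductive ZB : {poly rat} -> Prop :=
| ZBb b : ZB (binp b)
| ZBsub p q : ZB p -> ZB q -> ZB (p - q).

Lemma ZB0 : ZB 0.
Proof. by rewrite -(subrr (binp 0)); apply: ZBsub; apply: ZBb. Qed.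
Lemma ZBN p : ZB p -> ZB (- p).
Proof. by move=> H; rewrite -sub0r; apply: ZBsub => //; apply: ZB0. Qed.
Lemma ZBD p q : ZB p -> ZB q -> ZB (p + q).
Proof. by move=> Hp Hq; rewrite -[q]opprK; apply: ZBsub => //; apply: ZBN. Qed.
Lemma ZBMn p n : ZB p -> ZB (p *+ n).
Proof. by move=> H; elim: n => [|n IH]; [rewrite mulr0n; apply: ZB0 | rewrite mulrS; apply: ZBD]. Qed.
Lemma ZBzM (z : int) p : ZB p -> ZB ((z%:~R)%:P * p).
Proof.
move=> H; rewrite mul_polyC scaler_int; case: z => n.
  by apply: ZBMn.
by rewrite NegzE mulrNz; apply/ZBN/ZBMn.
Qed.

Lemma ZB_intv p : ZB p -> intv p.
Proof.
elim=> [b m|p1 q1 _ H1 _ H2 m].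
  by rewrite binp_nat; apply: isZn.
by rewrite hornerD hornerN; apply: isZB.
Qed.

Lemma binp0 : binp 0 = 1.
Proof. by rewrite /binp big_ord0 invr1 scale1r. Qed.

Lemma XaddC_subC (c : rat) : ('X + c%:P) \Po ('X - c%:P) = 'X.
Proof. by rewrite comp_polyD comp_polyX comp_polyC subrK. Qed.

Lemma ZB_binp_shift b : ZB (binp b \Po ('X - 1%:P)).
Proof.
elim: b => [|b IH]; first by rewrite binp0 -polyC1 comp_polyC polyC1 -binp0; apply: ZBb.
have E := Dbinp b.
have -> : binp b.+1 \Po ('X - 1%:P) = binp b.+1 - (binp b \Po ('X - 1%:P)).
  rewrite -E /Dp comp_polyB -comp_polyA XaddC_subC comp_polyXr; ring.
by apply: ZBsub => //; apply: ZBb.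
Qed.

Lemma ZB_shift p : ZB p -> ZB (p \Po ('X - 1%:P)).
Proof.
elim=> [b|p1 q1 _ H1 _ H2]; first exact: ZB_binp_shift.
by rewrite comp_polyB; apply: ZBsub.
Qed.

Lemma ZB_shiftN (N : nat) p : ZB p -> ZB (p \Po ('X - (N%:R)%:P)).
Proof.
move=> H; elim: N => [|N IH]; first by rewrite subr0 comp_polyXr.
have -> : p \Po ('X - (N.+1%:R)%:P) = (p \Po ('X - (N%:R)%:P)) \Po ('X - 1%:P).
  by rewrite -comp_polyA comp_polyB comp_polyX comp_polyC -natr1 polyCD; congr (_ \Po _); ring.
exact: ZB_shift.
Qed.

Lemma ZB_sum d (F : 'I_d -> {poly rat}) : (forall i, ZB (F i)) -> ZB (\sum_(i < d) F i).
Proof.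
move=> H; elim/big_ind: _ => //; [exact: ZB0 | exact: ZBD].
Qed.

Lemma intv_ZB q : intv q -> ZB q.
Proof.
move=> H; rewrite (newton idfun (leqnn (size q))).
apply: ZB_sum => b.
have [z Hz] := intv_iter b H 0; rewrite /= in Hz.
rewrite Hz /B map_poly_id //; apply: ZBzM; apply: ZBb.
Qed.

Lemma numerical_ZB p : numerical p -> ZB p.
Proof.
move=> [N HN].
have Hq : intv (p \Po ('X + (N%:R)%:P)).
  move=> m; rewrite horner_comp hornerD hornerX hornerC -natrD.
  by have [z Hz] := HN (m + N)%N (leq_addl _ _); exists z.
have -> : p = (p \Po ('X + (N%:R)%:P)) \Po ('X - (N%:R)%:P).
  by rewrite -comp_polyA XaddC_subC comp_polyXr.
by apply: ZB_shiftN; apply: intv_ZB.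
Qed.

Lemma ZB_numerical p : ZB p -> numerical p.
Proof. by move=> /ZB_intv H; exists 0%N => n _; apply: H. Qed.


Lemma prod_congr (d : int) n (x y : nat -> int) :
  exists z, \prod_(i < n) (x i + d * y i) = \prod_(i < n) x i + d * z.
Proof.
elim: n => [|n [z IH]]; first by exists 0; rewrite !big_ord0 mulr0 addr0.
rewrite !big_ord_recr /= IH.
exists (z * (x n + d * y n) + \prod_(i < n) x i * y n); ring.
Qed.

Lemma fact_dvd_prod (c n : nat) :
  ((n`!)%:Z %| \prod_(i < n) (c%:Z - i%:Z))%Z.
Proof.
have -> : \prod_(i < n) (c%:Z - i%:Z) = (c ^_ n)%:Z.
  by rewrite -[(c ^_ n)%:Z]natz -prod_nat; apply: eq_bigr => i _; rewrite !natz.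
by rewrite -bin_ffact PoszM dvdz_mull // dvdzz.
Qed.

Lemma bez (a : int) (b q : nat) : (0 < q)%N -> coprime q b ->
  exists c : nat, exists k : int, (b * c)%:Z = a + q%:Z * k.
Proof.
move=> q0 cop.
have [u _ hu] := Bezoutr b q0.
move: cop; rewrite coprime_sym /coprime => /eqP g1; rewrite g1 in hu.
have [t ht] := dvdnP hu.
have ht' : (u * b)%:Z = t%:Z * q%:Z - 1.
  by rewrite -PoszM -ht PoszD addrAC subrr add0r.
have qn0 : (q%:Z != 0) by rewrite eqz_nat -lt0n.
have ge := modz_ge0 (- a) qn0.
set a1 := ((- a) %% q)%Z in ge.
have [a1n ha1] : exists a1n : nat, a1 = a1n%:Z by exists `|a1|%N; rewrite gez0_abs.
have H2 := divz_eq (- a) q; rewrite -/a1 ha1 in H2.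
exists (u * a1n)%N, (t%:Z * a1n%:Z + ((- a) %/ q)%Z).
have Ea : a = - (((- a) %/ q)%Z * q%:Z + a1n%:Z) by rewrite -H2 opprK.
have -> : (b * (u * a1n))%:Z = (u * b)%:Z * a1n%:Z by rewrite !PoszM; ring.
rewrite ht' {1}Ea; ring.
Qed.

Lemma cop_dvd (a : int) (b n q : nat) : (0 < q)%N -> coprime q b -> (q %| n`!)%N ->
  (q%:Z %| \prod_(i < n) (a - (i * b)%:Z))%Z.
Proof.
move=> q0 cop qd; have [c [k E]] := bez a q0 cop.
have Ef : forall i : 'I_n, a - (i * b)%:Z = b%:Z * (c%:Z - i%:Z) + q%:Z * (- k).
  move=> i; have Ea : a = (b * c)%:Z - q%:Z * k by rewrite E; ring.
  by rewrite Ea !PoszM; ring.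
under eq_bigr do rewrite Ef.
have [z ->] := prod_congr q n (fun i => b%:Z * (c%:Z - i%:Z)) (fun _ => - k).
apply: rpredD; last by apply: dvdz_mulr; apply: dvdzz.
rewrite big_split /=; apply: dvdz_mull.
apply: dvdz_trans (fact_dvd_prod c n).
by rewrite dvdzE.
Qed.

Lemma NT (a : int) (b n : nat) :
  ((n`!)%:Z %| (b ^ n`!)%:Z * \prod_(i < n) (a - (i * b)%:Z))%Z.
Proof.
rewrite dvdzE abszM /=.
apply/(dvdn_partP _ (fact_gt0 n)) => p; rewrite mem_primes => /and3P [pp _ pdvd].
case: (boolP (p %| b)%N) => pb.
  apply: dvdn_mulr; rewrite p_part; apply: dvdn_trans (dvdn_exp2r _ pb).
  apply: dvdn_exp2l.
  have h := dvdn_leq (fact_gt0 n) (dvdn_part p n`!); rewrite p_part in h.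
  exact: ltnW (leq_trans (ltn_expl _ (prime_gt1 pp)) h).
apply: dvdn_mull.
have cop : coprime (n`!`_p) b by rewrite p_part coprimeXl // prime_coprime.
by have := cop_dvd a (part_gt0 p n`!) cop (dvdn_part p n`!); rewrite dvdzE.
Qed.


Lemma numB p q : numerical p -> numerical q -> numerical (p - q).
Proof.
move=> [N1 H1] [N2 H2]; exists (maxn N1 N2) => n hn.
have [a Ha] := H1 n (leq_trans (leq_maxl _ _) hn).
have [b Hb] := H2 n (leq_trans (leq_maxr _ _) hn).
by exists (a - b); rewrite hornerD hornerN Ha Hb rmorphB.
Qed.
Lemma numM p q : numerical p -> numerical q -> numerical (p * q).
Proof.
move=> [N1 H1] [N2 H2]; exists (maxn N1 N2) => n hn.
have [a Ha] := H1 n (leq_trans (leq_maxl _ _) hn).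
have [b Hb] := H2 n (leq_trans (leq_maxr _ _) hn).
by exists (a * b); rewrite hornerM Ha Hb rmorphM.
Qed.
Lemma num1 : numerical 1.
Proof. by exists 0%N => n _; exists 1; rewrite hornerC. Qed.
Lemma numX : numerical 'X.
Proof. by exists 0%N => n _; exists n; rewrite hornerX. Qed.
Lemma numXn j : numerical ('X^j).
Proof. by elim: j => [|j IH]; [rewrite expr0; exact: num1 | rewrite exprS; apply: numM => //; exact: numX]. Qed.

Lemma evT1 : forall p, ev T p = tofrac p. Proof. exact: evT. Qed.

Lemma inH1 : inH 1.
Proof. by exists 1, 0%N; split; [exact: num1 | rewrite /lev -/(ev T 1) (ev1 HK1) expr0 invr1 mulr1]. Qed.
Lemma inHT : inH T.
Proof. by exists 'X, 0%N; split; [exact: numX | rewrite /lev -/(ev T 'X) (evX HK1) expr0 invr1 mulr1]. Qed.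
Lemma inHTV : inH T^-1.
Proof. by exists 1, 1%N; split; [exact: num1 | rewrite /lev -/(ev T 1) (ev1 HK1) expr1 mul1r]. Qed.

Lemma inHB x y : inH x -> inH y -> inH (x - y).
Proof.
move=> [p [k [np ->]]] [q [j [nq ->]]]; exists (p * 'X^j - q * 'X^k), (k + j)%N.
split; first by apply: numB; apply: numM => //; apply: numXn.
exact: (levB HK1 _ _ _ _ T_unit).
Qed.
Lemma inHM x y : inH x -> inH y -> inH (x * y).
Proof.
move=> [p [k [np ->]]] [q [j [nq ->]]]; exists (p * q), (k + j)%N.
split; first exact: numM.
exact: (levM HK1 _ _ _ _ T_unit).
Qed.
Lemma inHD x y : inH x -> inH y -> inH (x + y).
Proof.
move=> hx hy; rewrite -[y]opprK -[- y]sub0r; apply: inHB => //.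
by apply: inHB => //; rewrite -(subrr 1); apply: inHB; exact: inH1.
Qed.
Lemma inHX x j : inH x -> inH (x ^+ j).
Proof. by move=> hx; elim: j => [|j IH]; [rewrite expr0; exact: inH1 | rewrite exprS; apply: inHM]. Qed.

Lemma subring_inH : subring inH.
Proof. by split; [exact: inH1 | exact: inHB | exact: inHM]. Qed.

Lemma fK1n (i : nat) : fK1 i%:R = i%:R.
Proof. by rewrite -HK1 ratr_nat. Qed.

Lemma evT_factor p (i k : nat) : ev T (p - (i%:R)%:P * 'X^k) = ev T p - i%:R * T ^+ k.
Proof. by rewrite (evB HK1) (evM HK1) (evC HK1) (evXn HK1) rmorph_nat. Qed.

Lemma binom_inH r n : inH r -> inH (binomK1 r n).
Proof.
move=> [p [k [[N HN] ->]]].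
set Q := (n`!%:R)^-1 *: ('X^(k * n`!) * \prod_(i < n) (p - (i%:R)%:P * 'X^k)).
have nf0 : (n`!%:R : rat) != 0 by rewrite pnatr_eq0 -lt0n fact_gt0.
exists Q, (k * n`! + k * n)%N; split.
  exists N => m hm; have [a Ha] := HN m hm.
  set b := (m ^ k)%N.
  have [y Hy] := dvdzP (NT a b n).
  exists y.
  have E : Q.[m%:R] = (n`!%:R)^-1 * (((b ^ n`!)%:Z * \prod_(i < n) (a - (i * b)%:Z))%:~R).
    rewrite /Q hornerZ hornerM hornerXn horner_prod intrM rmorph_prod; congr (_ * (_ * _)).
      by rewrite /b -expnM -natrX.
    apply: eq_bigr => i _; rewrite hornerD hornerN hornerM hornerC hornerXn Ha rmorphB /b.
    by rewrite PoszM /= intrM -natrX.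
  by rewrite E Hy intrM mulrC mulfK.
rewrite /binomK1 /falling /lev -/(ev T p) -/(ev T Q).
rewrite (evZ HK1) (evM HK1) (evXn HK1) (ev_prod HK1).
rewrite fmorphV rmorph_nat.
have Eprod : \prod_(i < n) ev T (p - (i%:R)%:P * 'X^k) = \prod_(i < n) (ev T p - i%:R * T ^+ k).
  by apply: eq_bigr => i _; apply: evT_factor.
rewrite Eprod.
have Tk : T ^+ k \is a GRing.unit by rewrite unitrX // T_unit.
have Ef : \prod_(i < n) (ev T p * T ^- k - i%:R) =
          \prod_(i < n) (ev T p - i%:R * T ^+ k) * T ^- (k * n).
  have Ef' : forall i : 'I_n, ev T p * T ^- k - i%:R = (ev T p - i%:R * T ^+ k) * T ^- k.
    by move=> i; rewrite mulrBl -mulrA mulrV // mulr1.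
  rewrite (eq_bigr _ (fun i _ => Ef' i)) big_split /= prodr_const card_ord exprVn -exprM.
  by rewrite mulnC.
rewrite Ef.
have U := unit_expV (k * n) (k * n`!) T_unit; rewrite addnC in U.
rewrite -U; ring.
Qed.


Lemma ev_binp (L : comUnitRingType) (f : {rmorphism rat -> L})
  (Hf : forall a, ratr a = f a) (x : L) b :
  ev x (binp b) = (b`!%:R)^-1 * falling x b.
Proof.
rewrite /binp (evZ Hf) (ev_prod Hf) fmorphV rmorph_nat; congr (_ * _).
by apply: eq_bigr => i _; rewrite (evB Hf) (evX Hf) (evC Hf) rmorph_nat.
Qed.

Lemma evK1_binp (x : K1) b : ev x (binp b) = binomK1 x b.
Proof. by rewrite (ev_binp HK1) /binomK1 mulrC. Qed.

Lemma ZB_inH_ev (x : K1) q : inH x -> ZB q -> inH (ev x q).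
Proof.
move=> hx; elim=> [b|p1 q1 _ H1 _ H2].
  by rewrite evK1_binp; apply: binom_inH.
by rewrite (evB HK1); apply: inHB.
Qed.

Lemma inH_laurent x : inH x -> laurent x.
Proof. by move=> [p [k [_ ->]]]; exists p, k. Qed.

Lemma antipode_ok x : inH x -> forall p k, x = lev T p k -> inH (antipode_rep p k).
Proof.
move=> [q [j [nq Ex]]] p k E.
have uV : T^-1 \is a GRing.unit by rewrite unitrV T_unit.
rewrite /antipode_rep (lev_transfer HK1 uV (etrans (esym E) Ex)).
rewrite /lev -/(ev _ q) exprVn invrK.
apply: inHM; first exact: ZB_inH_ev inHTV (numerical_ZB nq).
exact: inHX inHT.
Qed.

Lemma counit_ok x : inH x -> forall p k, x = lev T p k ->
  exists z : int, counit_rep p k = z%:~R.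
Proof.
move=> [q [j [nq Ex]]] p k E.
rewrite /counit_rep (lev_transfer HQ (unitr1 _) (etrans (esym E) Ex)).
rewrite /lev -/(ev _ q) expr1n invr1 mulr1 (evE HQ) map_poly_id //.
have [z Hz] := ZB_intv (numerical_ZB nq) 1.
by exists z.
Qed.


Lemma num0 : numerical 0.
Proof. by rewrite -(subrr 1); apply: numB; exact: num1. Qed.
Lemma numN p : numerical p -> numerical (- p).
Proof. by move=> h; rewrite -sub0r; apply: numB => //; exact: num0. Qed.

Lemma inHH0 : inHH 0.
Proof. by exists [::]; split => //; rewrite big_nil. Qed.

Lemma inHHD z w : inHH z -> inHH w -> inHH (z + w).
Proof.
move=> [s [hs ->]] [s' [hs' ->]]; exists (s ++ s'); split; last by rewrite big_cat.
by move=> e; rewrite mem_cat => /orP [/hs|/hs'].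
Qed.

Lemma inHHN z : inHH z -> inHH (- z).
Proof.
move=> [s [hs ->]].
exists [seq ((- e.1.1, e.1.2), e.2) | e <- s]; split.
  move=> e /mapP [e' /hs [h1 h2] ->] /=; split => //; exact: numN.
rewrite big_map -sumrN; apply: eq_bigr => e _ /=.
by rewrite -(levN HK2) mulNr.
Qed.

Lemma inHHB z w : inHH z -> inHH w -> inHH (z - w).
Proof. by move=> h1 h2; apply: inHHD => //; apply: inHHN. Qed.

Lemma inHH_shift z j : inHH z -> inHH (z * (t1 * t2) ^- j).
Proof.
move=> [s [hs ->]].
exists [seq ((e.1.1, (e.1.2 + j)%N), (e.2.1, (e.2.2 + j)%N)) | e <- s]; split.
  by move=> e /mapP [e' /hs [h1 h2] ->].
rewrite big_map mulr_suml; apply: eq_bigr => e _ /=.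
rewrite exprMn invfM mulrACA.
by rewrite (lev_shift _ _ _ t1_unit) (lev_shift _ _ _ t2_unit).
Qed.

Lemma inHH_term g h : numerical g -> numerical h -> inHH (ev t1 g * ev t2 h).
Proof.
move=> ng nh; exists [:: ((g, 0%N), (h, 0%N))]; split.
  by move=> e; rewrite inE => /eqP -> /=.
by rewrite big_seq1 /lev /= !expr0 !invr1 !mulr1.
Qed.

Lemma inHH_sum d (F : 'I_d -> K2) : (forall i, inHH (F i)) -> inHH (\sum_(i < d) F i).
Proof. by move=> H; elim/big_ind: _ => //; [exact: inHH0 | exact: inHHD]. Qed.

Lemma iter_map_Dp (S : comNzRingType) (g : {rmorphism {poly rat} -> S}) b (P : {poly {poly rat}}) :
  map_poly g (iter b (@Dp _) P) = iter b (@Dp _) (map_poly g P).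
Proof. by elim: b => //= b IH; rewrite map_Dp IH. Qed.

Lemma coef_num n b :
  numerical ((iter b (@Dp _) (map_poly polyC (binp n) \Po ('X%:P * 'X))).[0]).
Proof.
exists 0%N => m _.
have -> : ((iter b (@Dp _) (map_poly polyC (binp n) \Po ('X%:P * 'X))).[0]).[m%:R]
   = horner_eval (m%:R : rat) ((iter b (@Dp _) (map_poly polyC (binp n) \Po ('X%:P * 'X))).[0]) by [].
rewrite -(horner_map (horner_eval (m%:R : rat))) rmorph0 iter_map_Dp map_comp_poly.
have -> : map_poly (horner_eval (m%:R : rat)) (map_poly polyC (binp n)) = binp n.
  rewrite -map_poly_comp map_poly_id // => c _ /=; by rewrite horner_evalE hornerC.
have -> : map_poly (horner_eval (m%:R : rat)) ('X%:P * 'X) = (m%:R)%:P * 'X.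
  by rewrite rmorphM /= map_polyC map_polyX /= horner_evalE hornerX.
have H : intv (binp n \Po ((m%:R)%:P * 'X)).
  move=> y; rewrite horner_comp hornerM hornerC hornerX -natrM binp_nat; exact: isZn.
exact: (intv_iter b H 0).
Qed.

Lemma Delta_binp n : inHH (ev (t1 * t2) (binp n)).
Proof.
rewrite ev_t12.
set F := map_poly polyC (binp n) \Po ('X%:P * 'X).
rewrite (newton polyC (leqnn (size F))) rmorph_sum; apply: inHH_sum => b.
rewrite rmorphM /B.
have := inHH_term (coef_num n b) (ZB_numerical (ZBb b)); rewrite ev_t1 ev_t2.
exact.
Qed.

Lemma Delta_ZB q : ZB q -> inHH (ev (t1 * t2) q).
Proof.
elim=> [b|p1 q1 _ H1 _ H2]; first exact: Delta_binp.
by rewrite (evB HK2); apply: inHHB.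
Qed.

Lemma Delta_ok x : inH x -> forall p k, x = lev T p k -> inHH (Delta_rep p k).
Proof.
move=> [q [j [nq Ex]]] p k E.
rewrite /Delta_rep (lev_transfer HK2 t12_unit (etrans (esym E) Ex)).
rewrite /lev -/(ev _ q); apply: inHH_shift; exact: Delta_ZB (numerical_ZB nq).
Qed.


Section Univ.
Variable A : comAlgType rat.
Variable R : A -> Prop.
Hypothesis HR : binomial_subring R.
Variables r s : A.
Hypothesis Rr : R r.
Hypothesis Rs : R s.
Hypothesis rs : r * s = 1.

Definition evA (p : {poly rat}) : A := (map_poly (in_alg A) p).[r].

Lemma evAM p q : evA (p * q) = evA p * evA q.
Proof. by rewrite /evA rmorphM hornerM. Qed.
Lemma evAB p q : evA (p - q) = evA p - evA q.
Proof. by rewrite /evA rmorphB hornerD hornerN. Qed.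
Lemma evAD p q : evA (p + q) = evA p + evA q.
Proof. by rewrite /evA rmorphD hornerD. Qed.
Lemma evA1 : evA 1 = 1.
Proof. by rewrite /evA rmorph1 hornerC. Qed.
Lemma evAX : evA 'X = r.
Proof. by rewrite /evA map_polyX hornerX. Qed.
Lemma evAXn j : evA ('X^j) = r ^+ j.
Proof. by rewrite /evA map_polyXn hornerXn. Qed.

Lemma evA_binp b : evA (binp b) = binomA r b.
Proof.
rewrite /evA /binp /binomA -mul_polyC rmorphM /= map_polyC hornerM hornerC.
rewrite mulr_algl rmorph_prod horner_prod; congr (_ *: _).
by apply: eq_bigr => i _; rewrite /= map_polyXsubC hornerXsubC rmorph_nat.
Qed.

Lemma R1 : R 1. Proof. by case: HR => [[h _ _] _]. Qed.
Lemma RB x y : R x -> R y -> R (x - y). Proof. by case: HR => [[_ h _] _]; apply: h. Qed.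
Lemma RM x y : R x -> R y -> R (x * y). Proof. by case: HR => [[_ _ h] _]; apply: h. Qed.
Lemma RX x k : R x -> R (x ^+ k).
Proof. by move=> h; elim: k => [|k IH]; [rewrite expr0; exact: R1 | rewrite exprS; apply: RM]. Qed.

Lemma ZB_R p : ZB p -> R (evA p).
Proof.
elim=> [b|p1 q1 _ H1 _ H2]; last by rewrite evAB; apply: RB.
by rewrite evA_binp; case: HR => _; apply.
Qed.

Lemma rsK a j k : a * r ^+ j * s ^+ (j + k) = a * s ^+ k.
Proof. by rewrite exprD mulrA -(mulrA a) -exprMn rs expr1n mulr1. Qed.

Lemma wd p q k j : lev T p k = lev T q j -> evA p * s ^+ k = evA q * s ^+ j.
Proof.
move=> /levT_eq E.
have := congr1 evA E; rewrite !evAM !evAXn => E'.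
by rewrite -(rsK _ j k) E' addnC rsK.
Qed.

Definition phiU (x : K1) : A :=
  let pk := epsilon (inhabits (0 : {poly rat}, 0%N))
     (fun pk => numerical pk.1 /\ x = lev T pk.1 pk.2) in
  evA pk.1 * s ^+ pk.2.

Lemma phiE p k : numerical p -> phiU (lev T p k) = evA p * s ^+ k.
Proof.
move=> np; rewrite /phiU.
have [_ h] := epsilon_spec (inhabits (0 : {poly rat}, 0%N))
  (fun pk => numerical pk.1 /\ lev T p k = lev T pk.1 pk.2) (ex_intro _ (p, k) (conj np erefl)).
by rewrite -(wd h).
Qed.

Lemma lev10 : (1 : K1) = lev T 1 0.
Proof. by rewrite /lev -/(ev T 1) (ev1 HK1) expr0 invr1 mulr1. Qed.
Lemma levX0 : T = lev T 'X 0.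
Proof. by rewrite /lev -/(ev T 'X) (evX HK1) expr0 invr1 mulr1. Qed.

Lemma phi_hom : ringhom_H_to R phiU.
Proof.
split.
- move=> x [p [k [np ->]]]; rewrite phiE //; apply: RM; last exact: RX.
  exact: ZB_R (numerical_ZB np).
- by rewrite lev10 phiE ?expr0 ?mulr1; [exact: evA1 | exact: num1].
- move=> x y [p [k [np ->]]] [q [j [nq ->]]].
  rewrite (levD HK1 _ _ _ _ T_unit) !phiE //; last first.
    rewrite -[q * _]opprK; apply: numB; first by apply: numM => //; exact: numXn.
    by apply: numN; apply: numM => //; exact: numXn.
  by rewrite evAD !evAM !evAXn mulrDl (rsK (evA q) k j) addnC rsK.
- move=> x y [p [k [np ->]]] [q [j [nq ->]]].
  rewrite (levM HK1 _ _ _ _ T_unit) !phiE //; last exact: numM.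
  rewrite evAM exprD; ring.
Qed.

Lemma phiT : phiU T = r.
Proof. by rewrite levX0 phiE ?expr0 ?mulr1; [exact: evAX | exact: numX]. Qed.

Lemma uniq_phi (psi : K1 -> A) : ringhom_H_to R psi -> psi T = r ->
  forall p k, numerical p -> psi (lev T p k) = evA p * s ^+ k.
Proof.
move=> [Hin p1 pD pM] pT p k np.
have inH0 : inH 0 by rewrite -(subrr 1); apply: inHB; exact: inH1.
have psi0 : psi 0 = 0.
  have := pD 0 0 inH0 inH0; rewrite addr0 => h.
  by apply: (addrI (psi 0)); rewrite -h addr0.
have pB : forall x y, inH x -> inH y -> psi (x - y) = psi x - psi y.
  move=> x y hx hy; have := pD (x - y) y (inHB hx hy) hy.
  by rewrite subrK => ->; rewrite addrK.
have pX : forall x j, inH x -> psi (x ^+ j) = psi x ^+ j.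
  move=> x j hx; elim: j => [|j IH]; first by rewrite !expr0.
  by rewrite !exprS pM ?IH //; apply: inHX.
have inHn : forall i : nat, inH (i%:R).
  elim=> [|i IH]; first exact: inH0.
  by rewrite -natr1; apply: inHD => //; exact: inH1.
have pn : forall i : nat, psi i%:R = i%:R.
  elim=> [|i IH]; first exact: psi0.
  by rewrite -natr1 pD ?IH ?p1 ?natr1 //; exact: inH1.
have inHfall : forall n, inH (falling T n).
  elim=> [|n IH]; first by rewrite /falling big_ord0; exact: inH1.
  by rewrite /falling big_ord_recr /=; apply: inHM => //; apply: inHB => //; exact: inHT.
have pfall : forall n, psi (falling T n) = falling r n.
  elim=> [|n IH]; first by rewrite /falling !big_ord0.
  rewrite /falling big_ord_recr /= pM //; last by apply: inHB => //; exact: inHT.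
  rewrite -/(falling T n) IH pB ?pT ?pn //; first by rewrite big_ord_recr.
  all: try first [exact: inHT | exact: (inHfall n)].
have pbin : forall b, psi (binomK1 T b) = binomA r b.
  move=> b.
  have nf : (b`!%:R : K1) != 0.
    by rewrite -(rmorph_nat fK1) fmorph_eq0 pnatr_eq0 -lt0n fact_gt0.
  have E : falling T b = b`!%:R * binomK1 T b by rewrite /binomK1 mulrC divfK.
  have := pfall b; rewrite E pM; [ | exact: inHn | exact: binom_inH inHT].
  rewrite pn => h; rewrite /binomA -h mulr_natl -scaler_nat scalerA mulVf ?scale1r //.
  by rewrite pnatr_eq0 -lt0n fact_gt0.
have pev : forall q, ZB q -> psi (ev T q) = evA q.
  move=> q; elim=> [b|p' q' Hp' H1 Hq' H2]; first by rewrite evK1_binp pbin evA_binp.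
  rewrite (evB HK1) pB ?H1 ?H2 ?evAB //; exact: ZB_inH_ev inHT _.
have pTV : psi T^-1 = s.
  have := pM T T^-1 inHT inHTV; rewrite mulfV ?T_neq0 // p1 pT => h.
  by rewrite -[s]mulr1 h mulrA [s * r]mulrC rs mul1r.
rewrite /lev -/(ev T p) -exprVn pM; last first.
    by apply: inHX; exact: inHTV.
  exact: ZB_inH_ev inHT (numerical_ZB np).
by rewrite pX ?pTV ?pev //; [exact: numerical_ZB | exact: inHTV].
Qed.
End Univ.


Theorem theorem1p3 :
  (* (a) H is a Hopf subalgebra of Q[t,1/t] *)
  ((forall x, inH x -> laurent x) /\
   subring inH /\
   (forall x, inH x -> forall p k, x = lev T p k -> inHH (Delta_rep p k)) /\
   (forall x, inH x -> forall p k, x = lev T p k ->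
      exists z : int, counit_rep p k = z%:~R) /\
   (forall x, inH x -> forall p k, x = lev T p k -> inH (antipode_rep p k)))
  /\
  (* (b) H is a binomial ring, free on the unit t *)
  ((subring inH /\ (forall r n, inH r -> inH (binomK1 r n))) /\
   inH T /\ (exists u, inH u /\ T * u = 1) /\
   (forall (A : comAlgType rat) (R : A -> Prop), binomial_subring R ->
    forall r : A, R r -> (exists s, R s /\ r * s = 1) ->
      (exists phi : K1 -> A, ringhom_H_to R phi /\ phi T = r) /\
      (forall phi psi : K1 -> A, ringhom_H_to R phi -> ringhom_H_to R psi ->
         phi T = r -> psi T = r -> forall x, inH x -> phi x = psi x))).
Proof.
split.
  split; first exact: inH_laurent.
  split; first exact: subring_inH.
  split; first exact: Delta_ok.
  split; [exact: counit_ok | exact: antipode_ok].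
split; first by split; [exact: subring_inH | move=> r n; exact: binom_inH].
split; first exact: inHT.
split; first by exists T^-1; split; [exact: inHTV | exact: mulfV T_neq0].
move=> A R HR r Rr [s [Rs rs]]; split.
  by exists (phiU r s); split; [exact: phi_hom | exact: phiT].
move=> ph ps Hph Hps Tph Tps x [p [k [np ->]]].
by rewrite (@uniq_phi _ R r s rs ph Hph Tph p k np) (@uniq_phi _ R r s rs ps Hps Tps p k np).
Qed.
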